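(* For every $n\ge 0$, $\tilde h_n(q)=\bar c_{n+1}(q)$, where $\tilde h_n(q)=q^{n(n-1)/2}h_n(q^{-1})$ and $\bar c_n(q)$ are the Han–Zeng $q$-normalized median Genocchi numbers.
   Context: Han–Zeng polynomials: define $C_1(x,q)=1$ and for $n\ge2$ $$C_n(x,q)=(1+qx)\,\frac{(1+qx)\,C_{n-1}(1+qx,q)-x\,C_{n-1}(x,q)}{1+qx-x},$$ and set $\bar c_n(q)=C_n(1,q)/(1+q)^{n-1}$ for $n\ge1$ (these are polynomials in $q$). Gaussian binomial coefficients: $\binom{m}{k}_q=\frac{[m]_q!}{[k]_q![m-k]_q!}$, $[m]_q!=\prod_{i=1}^m\frac{1-q^i}{1-q}$, zero unless $0\le k\le m$. Let $W$ be $\mathbb C^n$ with basis $w_1,\dots,w_n$, $pr_k:W\to W$ the projection killing the $w_k$-coordinate. The degenerate flag variety $\mathrm{Fl}^a_n$ consists of tuples $(V_1,\dots,V_{n-1})$ of subspaces with $\dim V_k=k$ and $pr_{k+1}V_k\subset V_{k+1}$ ($k=1,\dots,n-2$); it has a decomposition into complex affine cells and $h_n(q)$ denotes its Poincaré polynomial with $q=t^2$ (degree $n(n-1)/2$, $h_0=h_1=1$). It is known that $h_n(q)=\sum_{f_1,\dots,f_{n-1}\ge 0} q^{\sum_{k=1}^{n-1}(k-f_k)(1-f_k+f_{k+1})}\prod_{k=1}^{n-1}\binom{1+f_{k-1}}{f_k}_{q}\binom{1+f_{k+1}}{f_k}_{q}$ with $f_0=f_n=0$. *)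

(* Defs.v *)
From HB Require Import structures.
From mathcomp Require Import all_boot all_order all_algebra.
Set Implicit Arguments. Unset Strict Implicit. Unset Printing Implicit Defensive.
Import Order.TTheory GRing.Theory Num.Theory.
Local Open Scope ring_scope.

Definition qint (R : fieldType) (t : R) (i : nat) : R := \sum_(j < i) t ^+ j.
Definition qfact (R : fieldType) (t : R) (m : nat) : R :=
  \prod_(i < m) qint t i.+1.
Definition qbinom (R : fieldType) (t : R) (m k : nat) : R :=
  if (k <= m)%N then qfact t m / (qfact t k * qfact t (m - k)) else 0.

(* The sequence f_0, f_1, ..., f_n with f_0 = f_n = 0 and f_k (1<=k<=n-1)
   read from the tuple s = (f_1, ..., f_{n-1}). *)
Definition fseq (n : nat) (s : seq nat) (k : nat) : nat :=
  if (0 < k < n)%N then nth 0%N s k.-1 else 0%N.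

(* Only tuples with all f_k < n are summed; all other terms vanish since a
   nonzero term forces f_k <= 1 + f_{k-1}, hence f_k <= k <= n-1. *)
Definition h_at (R : fieldType) (t : R) (n : nat) : R :=
  \sum_(f : (n.-1).-tuple 'I_n)
    let F := fseq n (map val f) in
    t ^ (\sum_(1 <= k < n) (((k : int) - (F k : int)) * (1 - (F k : int) + (F k.+1 : int))))
    * \prod_(1 <= k < n) (qbinom t (1 + F k.-1) (F k) * qbinom t (1 + F k.+1) (F k)).

Definition K := {fraction {poly rat}}.
Definition qK : K := tofrac 'X.

(* HZ m = C_{m+1}(x,q), as a polynomial in x over Q(q).
   C_1 = 1; C_n = (1+qx) * ((1+qx) C_{n-1}(1+qx) - x C_{n-1}(x)) / (1+qx-x).
   The quotient is exact; divp is Euclidean division in Q(q)[x]. *)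
Definition aK : {poly K} := 1 + qK *: 'X.
Fixpoint HZ (m : nat) : {poly K} :=
  match m with
  | 0 => 1
  | m'.+1 => aK * ((aK * (HZ m' \Po aK) - 'X * HZ m') %/ (aK - 'X))
  end.
Definition C (n : nat) : {poly K} := HZ n.-1.

Definition cbar (n : nat) : K := (C n).[1] / (1 + qK) ^+ n.-1.

Definition htilde (n : nat) : K := qK ^+ ((n * (n - 1)) %/ 2)%N * h_at qK^-1 n.

(* Main.v *)
Require Import Defs.
From HB Require Import structures.
From mathcomp Require Import all_boot all_order all_algebra.
From mathcomp Require Import ring lra zify.
Set Implicit Arguments. Unset Strict Implicit. Unset Printing Implicit Defensive.
Import Order.TTheory GRing.Theory Num.Theory.
Local Open Scope ring_scope.

Lemma qintS (R : fieldType) (t : R) k : qint t k.+1 = 1 + t * qint t k.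
Proof.
rewrite /qint big_ord_recl expr0 mulr_sumr; congr (_ + _).
by apply: eq_bigr => i _; rewrite exprS.
Qed.
Lemma qintSr (R : fieldType) (t : R) k : qint t k.+1 = qint t k + t ^+ k.
Proof. by rewrite /qint big_ord_recr. Qed.
Lemma qint0 (R : fieldType) (t : R) : qint t 0 = 0.
Proof. by rewrite /qint big_ord0. Qed.
Lemma qint1 (R : fieldType) (t : R) : qint t 1 = 1.
Proof. by rewrite qintS qint0 mulr0 addr0. Qed.
Lemma qfactS (R : fieldType) (t : R) m : qfact t m.+1 = qfact t m * qint t m.+1.
Proof. by rewrite /qfact big_ord_recr. Qed.
Lemma qfact0 (R : fieldType) (t : R) : qfact t 0 = 1.
Proof. by rewrite /qfact big_ord0. Qed.
Lemma qint_geom (R : fieldType) (t : R) k : qint t k * (t - 1) = t ^+ k - 1.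
Proof.
elim: k => [|k IH]; first by rewrite qint0 mul0r expr0 subrr.
by rewrite qintSr mulrDl IH exprS; ring.
Qed.

Section Gen.
Variable F : fieldType.
Variable q : F.
Hypothesis q0 : q != 0.
Hypothesis qi0 : forall k, (0 < k)%N -> qint q k != 0.
Local Notation qi := (qint q).

Lemma qf_neq0 m : qfact q m != 0.
Proof.
elim: m => [|m IH]; first by rewrite qfact0 oner_neq0.
by rewrite qfactS mulf_neq0 // qi0.
Qed.

Definition aG : {poly F} := 1 + q *: 'X.
Definition Tp (P : {poly F}) : {poly F} := aG * ((aG * (P \Po aG) - 'X * P) %/ (aG - 'X)).
Fixpoint HZg (m : nat) : {poly F} :=
  match m with
  | 0 => 1
  | m'.+1 => aG * ((aG * (HZg m' \Po aG) - 'X * HZg m') %/ (aG - 'X))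
  end.

Definition Nk (k : nat) : {poly F} := \prod_(j < k) ('X - (qi j.+1)%:P).
Definition lam (a : nat) : F := q * qi a.
Definition mu (a : nat) : F := (1 + q) * qi a.+1 ^+ 2.
Definition rho (a : nat) : F := qi a * qi a.+1 ^+ 2.
Definition Dk (k : nat) : {poly F} :=
  if k is k'.+1 then qi k'.+2 *: ('X * Nk k') else 1.

Lemma NkS k : Nk k.+1 = Nk k * ('X - (qi k.+1)%:P).
Proof. by rewrite /Nk big_ord_recr. Qed.

Lemma aGE : aG = 1 + q%:P * 'X.
Proof. by rewrite /aG mul_polyC. Qed.

Lemma Ncomp k : Nk k \Po aG = q ^+ k *: \prod_(j < k) ('X - (qi j)%:P).
Proof.
elim: k => [|k IH].
  by rewrite /Nk !big_ord0 expr0 scale1r comp_polyC.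
rewrite NkS comp_polyM IH comp_polyB comp_polyX comp_polyC big_ord_recr /=.
rewrite -!mul_polyC aGE qintS !rmorphD !rmorphM /= polyC1 exprS rmorphM /=.
ring.
Qed.

Lemma NcompS k : Nk k.+1 \Po aG = q ^+ k.+1 *: ('X * Nk k).
Proof.
by rewrite Ncomp big_ord_recl qint0 subr0.
Qed.

Lemma aGX_neq0 : aG - 'X != 0.
Proof.
apply/negP => /eqP H; have := congr1 (fun p => p.[0]) H.
rewrite aGE !hornerE /= subr0 => /eqP; apply/negP; exact: oner_neq0.
Qed.

Lemma numN k : aG * (Nk k \Po aG) - 'X * Nk k = Dk k * (aG - 'X).
Proof.
case: k => [|k].
  by rewrite /Dk /Nk big_ord0 comp_polyC polyC1 !mulr1 mul1r.
rewrite NcompS /Dk NkS.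
have Hg := qint_geom q k.+1.
have HQ : q ^+ k.+1 = qi k.+1 * (q - 1) + 1 by rewrite Hg subrK.
rewrite HQ !qintS -!mul_polyC aGE.
rewrite !(rmorphD, rmorphM, rmorphB, polyC1) /=.
ring.
Qed.

Lemma TN k : Tp (Nk k) = lam k.+1 *: Nk k.+1 + mu k *: Nk k + rho k *: Nk k.-1.
Proof.
rewrite /Tp numN mulpK; last exact: aGX_neq0.
case: k => [|k].
  rewrite /Dk /lam /mu /rho qint0 mul0r scale0r addr0 NkS /Nk big_ord0 qint1.
  rewrite -!mul_polyC aGE !(rmorphD, rmorphM, rmorphB, rmorphXn, polyC1) /=. ring.
rewrite /Dk /lam /mu /rho /= !NkS !qintS -!mul_polyC aGE.
rewrite !(rmorphD, rmorphM, rmorphB, rmorphXn, polyC1) /=.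
ring.
Qed.


Fixpoint w (n a : nat) : F :=
  match n with
  | 0 => (a == 0)%:R
  | n'.+1 => lam a * w n' a.-1 + mu a * w n' a + rho a.+1 * w n' a.+1
  end.

Lemma w_gt n a : (n < a)%N -> w n a = 0.
Proof.
elim: n a => [|n IH] a Ha /=; first by case: a Ha.
have H1 : (n < a.-1)%N by case: a Ha.
have H2 : (n < a)%N by apply: ltnW.
have H3 : (n < a.+1)%N by apply: (ltn_trans H2).
by rewrite (IH _ H1) (IH _ H2) (IH _ H3) !mulr0 !addr0.
Qed.

Lemma lam0 : lam 0 = 0.
Proof. by rewrite /lam qint0 mulr0. Qed.
Lemma rho0 : rho 0 = 0.
Proof. by rewrite /rho qint0 mul0r. Qed.

Lemma Tp_N k : Tp (Nk k) = aG * Dk k.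
Proof. by rewrite /Tp numN mulpK //; exact: aGX_neq0. Qed.

Lemma Tp_sum S (c : nat -> F) :
  Tp (\sum_(0 <= k < S) c k *: Nk k) = \sum_(0 <= k < S) c k *: Tp (Nk k).
Proof.
under [RHS]eq_bigr => k _ do rewrite Tp_N.
rewrite /Tp.
have -> : aG * ((\sum_(0 <= k < S) c k *: Nk k) \Po aG) - 'X * (\sum_(0 <= k < S) c k *: Nk k)
   = (\sum_(0 <= k < S) c k *: Dk k) * (aG - 'X).
  rewrite linear_sum mulr_sumr mulr_sumr mulr_suml -sumrB; apply: eq_bigr => k _.
  by rewrite linearZ /= -!scalerAr -scalerBr numN scalerAl.
rewrite mulpK; last exact: aGX_neq0.
rewrite mulr_sumr; apply: eq_bigr => k _.
by rewrite scalerAr.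
Qed.

Lemma HZ_N n : HZg n = \sum_(0 <= k < n.+1) w n k *: Nk k.
Proof.
elim: n => [|n IH].
  by rewrite big_nat1 /= scale1r /Nk big_ord0.
have -> : HZg n.+1 = Tp (HZg n) by [].
rewrite IH Tp_sum.
under eq_bigr => k _ do rewrite TN !scalerDr !scalerA.
rewrite !big_split /=.
rewrite [in RHS](eq_bigr (fun k => (lam k * w n k.-1) *: Nk k + (mu k * w n k) *: Nk k
   + (rho k.+1 * w n k.+1) *: Nk k)); last by move=> k _; rewrite !scalerDl.
rewrite !big_split /=.
congr (_ + _ + _).
- rewrite [in RHS]big_nat_recl // lam0 mul0r scale0r add0r.
  by apply: eq_bigr => k _; rewrite mulrC.
- rewrite [in RHS]big_nat_recr //= (w_gt (ltnSn n)) mulr0 scale0r addr0.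
  by apply: eq_bigr => k _; rewrite mulrC.
- rewrite [in RHS]big_nat_recr //= (w_gt (ltnW (ltnSn n.+1))) mulr0 scale0r addr0.
  rewrite [in LHS]big_nat_recl // rho0 mulr0 scale0r add0r.
  rewrite [in RHS]big_nat_recr //= (w_gt (ltnSn n)) mulr0 scale0r addr0.
  by apply: eq_bigr => k _; rewrite mulrC.
Qed.

Lemma Nk1 k : (Nk k).[1] = (k == 0)%:R.
Proof.
case: k => [|k]; first by rewrite /Nk big_ord0 hornerE.
rewrite /Nk big_ord_recl hornerM !hornerE qint1 subrr mul0r //.
Qed.

Lemma HZ1 n : (HZg n).[1] = w n 0.
Proof.
rewrite HZ_N horner_sum big_nat_recl // hornerZ Nk1 mulr1.
rewrite big1 ?addr0 // => k _; rewrite hornerZ Nk1 mulr0 //.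
Qed.


Definition Mh (a c : nat) : F :=
  q ^ ((c : int) * ((c : int) - (a : int))) * qbinom q (1 + a) c * qbinom q (1 + c) a.

Lemma qb_gt m k : (m < k)%N -> qbinom q m k = 0.
Proof. by rewrite /qbinom ltnNge => /negbTE ->. Qed.

Lemma qb_diag m : qbinom q m m = 1.
Proof. by rewrite /qbinom leqnn subnn qfact0 mulr1 divff // qf_neq0. Qed.

Lemma qb_S m : qbinom q m.+1 m = qi m.+1.
Proof.
rewrite /qbinom leqnSn subSnn qfactS (_ : qfact q 1 = 1); last first.
  by rewrite qfactS qfact0 mul1r qint1.
by rewrite mulr1 mulrC mulKf // qf_neq0.
Qed.

Lemma qb_SS m : qbinom q m.+2 m = qi m.+2 * qi m.+1 / qi 2.
Proof.
rewrite /qbinom (leq_trans (leqnSn m) (leqnSn _)) (_ : (m.+2 - m = 2)%N); last first.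
  by rewrite -addn2 addKn.
rewrite !qfactS qfact0 mul1r qint1 mul1r.
have H := qf_neq0 m; have H2 := qi0 (isT : (0 < 2)%N).
field. by rewrite H H2.
Qed.

Lemma Mh_diag a : Mh a a = qi a.+1 ^+ 2.
Proof.
by rewrite /Mh subrr mulr0 expr0z mul1r add1n qb_S expr2.
Qed.

Lemma Mh_up a : Mh a a.+1 = q ^+ a.+1 * (qi a.+2 * qi a.+1 / qi 2).
Proof.
rewrite /Mh (_ : (a.+1 : int) - (a : int) = 1); last by lia.
by rewrite mulr1 add1n qb_diag mulr1 add1n qb_SS.
Qed.

Lemma Mh_down a : Mh a.+1 a = (q ^+ a)^-1 * (qi a.+2 * qi a.+1 / qi 2).
Proof.
rewrite /Mh (_ : (a : int) * ((a : int) - (a.+1 : int)) = - (a : int)); last by lia.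
by rewrite -exprnN add1n qb_SS add1n qb_diag mulr1.
Qed.

Lemma Mh_far a c : (a.+1 < c)%N || (c.+1 < a)%N -> Mh a c = 0.
Proof.
case/orP => H; rewrite /Mh.
  by rewrite (qb_gt (m := 1 + a)) ?mulr0 ?mul0r // add1n.
by rewrite (qb_gt (m := 1 + c) (k := a)) ?mulr0 // add1n.
Qed.

Lemma sum3 (g : nat -> F) a B :
  (forall c, (B <= c)%N -> g c = 0) ->
  (forall c, (c.+1 < a)%N || (a.+1 < c)%N -> g c = 0) ->
  \sum_(c < B) g c = (if a is a'.+1 then g a' else 0) + g a + g a.+1.
Proof.
move=> HB Hf.
rewrite -(big_mkord xpredT g).
have -> : \sum_(0 <= c < B) g c = \sum_(0 <= c < B + a.+3) g c.
  rewrite [RHS](big_cat_nat _ (n := B)) ?leq_addr // [X in _ = _ + X]big_nat_cond.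
  by rewrite [X in _ = _ + X]big1 ?addr0 // => c /andP [/andP [Hc _] _]; apply: HB.
case: a Hf => [|a] Hf.
  rewrite (big_cat_nat _ (n := 2)) //; last by lia.
  rewrite [X in _ + X = _]big_nat_cond [X in _ + X = _]big1 ?addr0; last first.
    by move=> c /andP [/andP [Hc _] _]; apply: Hf; rewrite orbC /= Hc.
  by rewrite big_nat_recr //= big_nat1 add0r.
rewrite (big_cat_nat _ (n := a)) //; last by lia.
rewrite (big_cat_nat _ (m := a) (n := a.+3)) //; try lia.
rewrite [X in X + _ = _]big_nat_cond [X in X + _ = _]big1 ?add0r; last first.
  by move=> c /andP [/andP [_ Hc] _]; apply: Hf; apply/orP; left; lia.
rewrite [X in _ + X = _]big_nat_cond [X in _ + X = _]big1 ?addr0; last first.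
  by move=> c /andP [/andP [Hc _] _]; apply: Hf; apply/orP; right; lia.
rewrite /index_iota (_ : (a.+3 - a = 3)%N); last by lia.
rewrite unlock /=.
by rewrite addr0 addrA.
Qed.

Definition V (j c : nat) : F :=
  qfact q c.+1 * w j c / ((1 + q) ^+ j * q ^+ 'C(c.+1, 2)).

Lemma onepq : 1 + q = qi 2.
Proof. by rewrite qintS qint1 mulr1. Qed.

Lemma V_gt j c : (j < c)%N -> V j c = 0.
Proof. by move=> H; rewrite /V w_gt // mulr0 mul0r. Qed.

Lemma step j a B : (j < B)%N ->
  \sum_(c < B) Mh a c * V j c = V j.+1 a.
Proof.
move=> HjB.
rewrite (@sum3 (fun c => Mh a c * V j c) a B).
- have Q2 := qi0 (isT : (0 < 2)%N).
  have Hq1 : 1 + q != 0 by rewrite onepq.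
  case: a => [|a].
    rewrite add0r Mh_diag Mh_up /V /= lam0 mul0r add0r !qfactS qfact0 !mul1r.
    rewrite (_ : 'C(1, 2) = 0%N) // (_ : 'C(2, 2) = 1%N) // /mu /rho qint1 onepq [qi 2 ^+ j.+1]exprS.
    have HP : qi 2 ^+ j != 0 by rewrite expf_neq0.
    set P := qi 2 ^+ j.
    field. by rewrite Q2 q0 HP.
  rewrite Mh_down Mh_diag Mh_up /V /= !qfactS.
  rewrite !binS !bin1 !exprD.
  rewrite /lam /mu /rho onepq [qi 2 ^+ j.+1]exprS.
  have HP : qi 2 ^+ j != 0 by rewrite expf_neq0.
  set P := qi 2 ^+ j.
  rewrite !bin0 !expr1 !exprS.
  have HQa : q ^+ a != 0 by rewrite expf_neq0.
  have HQc : q ^+ 'C(a, 2) != 0 by rewrite expf_neq0.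
  set Qa := q ^+ a. set Qc := q ^+ 'C(a, 2).
  have H1 := qi0 (ltn0Sn a); have H2 := qi0 (ltn0Sn a.+1); have H3 := qi0 (ltn0Sn a.+2).
  have Hf := qf_neq0 a.
  field. by rewrite q0 HQa HQc HP Q2.
- by move=> c Hc; rewrite V_gt ?mulr0 //; apply: (leq_trans HjB).
- by move=> c Hc; rewrite Mh_far ?mul0r // orbC.
Qed.


Lemma binD2 k l : 'C(k + l, 2) = ('C(k, 2) + 'C(l, 2) + k * l)%N.
Proof.
elim: l => [|l IH]; first by rewrite addn0 muln0 addn0 bin0n addn0.
rewrite addnS !binS !bin1 IH; lia.
Qed.

Lemma qint_inv i : qint q^-1 i * q ^+ i.-1 = qi i.
Proof.
elim: i => [|i IH]; first by rewrite !qint0 mul0r.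
case: i IH => [|i] IH; first by rewrite !qint1 expr0 mulr1.
rewrite qintS mulrDl mul1r exprSr.
have -> : q^-1 * qint q^-1 i.+1 * (q ^+ i * q) = (qint q^-1 i.+1 * q ^+ i) * (q^-1 * q) by ring.
by rewrite IH mulVf // mulr1 [qi i.+2]qintSr addrC exprSr.
Qed.

Lemma qfact_inv m : qfact q^-1 m * q ^+ 'C(m, 2) = qfact q m.
Proof.
elim: m => [|m IH]; first by rewrite !qfact0 mul1r.
rewrite !qfactS binS bin1 exprD -(qint_inv m.+1) /= -IH; ring.
Qed.

Lemma qb_inv m k :
  qbinom q^-1 m k = q ^ (- ((k : int) * ((m : int) - (k : int)))) * qbinom q m k.
Proof.
rewrite /qbinom; case: leqP => H; last by rewrite mulr0.
have -> : ((k : int) * ((m : int) - (k : int))) = (k * (m - k))%N.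
  by rewrite PoszM subzn.
rewrite -exprnN -(qfact_inv m) -(qfact_inv k) -(qfact_inv (m - k)).
have -> : 'C(m, 2) = ('C(k, 2) + 'C(m - k, 2) + k * (m - k))%N.
  by rewrite -binD2 subnKC.
have Hf1 := qf_neq0 k; have Hf2 := qf_neq0 (m - k).
have Hf1' : qfact q^-1 k != 0.
  by apply: contra Hf1 => /eqP H0; rewrite -qfact_inv H0 mul0r.
have Hf2' : qfact q^-1 (m - k) != 0.
  by apply: contra Hf2 => /eqP H0; rewrite -qfact_inv H0 mul0r.
rewrite !exprD.
have HA : q ^+ 'C(k, 2) != 0 by rewrite expf_neq0.
have HB : q ^+ 'C(m - k, 2) != 0 by rewrite expf_neq0.
have HC : q ^+ (k * (m - k)) != 0 by rewrite expf_neq0.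
field. by rewrite Hf1' Hf2' HA HB HC.
Qed.



Lemma qb0 m : qbinom q m 0 = 1.
Proof. by rewrite /qbinom leq0n subn0 qfact0 mul1r divff // qf_neq0. Qed.

Lemma binprod (f : nat -> nat) n : f 0 = 0%N -> f n.+1 = 0%N ->
  \prod_(1 <= k < n.+1) (qbinom q (1 + f k.-1) (f k) * qbinom q (1 + f k.+1) (f k))
  = \prod_(0 <= k < n.+1) (qbinom q (1 + f k) (f k.+1) * qbinom q (1 + f k.+1) (f k)).
Proof.
move=> f0 fn.
rewrite !big_split /=; congr (_ * _).
  by rewrite [RHS]big_nat_recr // fn qb0 Monoid.mulm1 big_add1.
by rewrite [RHS]big_nat_recl // f0 qb0 mul1r big_add1.
Qed.

Lemma prod_pull I (r : seq I) (P : pred I) (z : I -> int) (y : I -> F) :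
  \prod_(i <- r | P i) (q ^ z i * y i) = q ^ (\sum_(i <- r | P i) z i) * \prod_(i <- r | P i) y i.
Proof.
rewrite big_split /=; congr (_ * _).
by rewrite (big_morph (fun z => q ^ z) (fun x y => expfzDr x y q0) (expr0z q)).
Qed.

Lemma expo (f : nat -> nat) n :
  \sum_(1 <= k < n.+1) ((k : int) - ((k : int) - (f k : int)) * (1 - (f k : int) + (f k.+1 : int))
     - (f k : int) * (Posz (1 + f k.-1)%N - (f k : int)) - (f k : int) * (Posz (1 + f k.+1)%N - (f k : int)))
  = \sum_(0 <= k < n.+1) ((f k.+1 : int) * ((f k.+1 : int) - (f k : int)))
    - (f n.+1 : int) * ((f n.+1 : int) - (f n : int)) - (n : int) * (f n.+1 : int).
Proof.
elim: n => [|n IH].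
  by rewrite big_geq // big_nat1; ring.
rewrite big_nat_recr // [in RHS]big_nat_recr //= IH.
rewrite !PoszD; ring.
Qed.


Lemma conv (f : nat -> nat) n : f 0 = 0%N -> f n.+1 = 0%N ->
  q ^+ 'C(n.+1, 2) * (q^-1 ^ (\sum_(1 <= k < n.+1) (((k : int) - (f k : int)) * (1 - (f k : int) + (f k.+1 : int))))
    * \prod_(1 <= k < n.+1) (qbinom q^-1 (1 + f k.-1) (f k) * qbinom q^-1 (1 + f k.+1) (f k)))
  = \prod_(0 <= k < n.+1) Mh (f k) (f k.+1).
Proof.
move=> f0 fn.
under eq_bigr => k _ do rewrite !qb_inv mulrACA -expfzDr //.
rewrite prod_pull.
rewrite /Mh; under [RHS]eq_bigr => k _ do rewrite -mulrA.
rewrite prod_pull -binprod //.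
rewrite exprz_inv exprnP mulrA -expfzDr // mulrA -expfzDr //.
congr (q ^ _ * _).
have HC : ('C(n.+1, 2) : int) = \sum_(1 <= k < n.+1) (k : int).
  rewrite -bin2_sum big_nat_recl // add0n.
  rewrite (big_morph Posz PoszD (erefl (Posz 0))).
  by rewrite [RHS]big_add1.
have E := expo f n; rewrite fn mul0r subr0 mulr0 subr0 in E.
rewrite HC -E -sumrN -!big_split /=.
by apply: eq_bigr => k _; ring.
Qed.


Lemma sum_tupleS (T : finType) m (G : m.+1.-tuple T -> F) :
  \sum_(t : m.+1.-tuple T) G t = \sum_(x : T) \sum_(t : m.-tuple T) G [tuple of x :: t].
Proof.
rewrite pair_big /=.
rewrite (reindex (fun t : m.+1.-tuple T => (thead t, [tuple of behead t]))) /=.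
  by apply: eq_bigr => t _; rewrite -tuple_eta.
exists (fun p : T * m.-tuple T => [tuple of p.1 :: p.2]) => [t _ | [x t] _] /=.
  by rewrite -tuple_eta.
by rewrite theadE; congr pair; apply: val_inj.
Qed.

Definition Qth (B m a : nat) : F :=
  \sum_(f : m.-tuple 'I_B)
    \prod_(0 <= k < m.+1) Mh (nth 0%N (a :: map val f) k) (nth 0%N (a :: map val f) k.+1).

Lemma Qth_S B m a : Qth B m.+1 a = \sum_(c < B) Mh a c * Qth B m c.
Proof.
rewrite /Qth sum_tupleS; apply: eq_bigr => x _; rewrite mulr_sumr.
apply: eq_bigr => t _.
by rewrite big_nat_recl.
Qed.

Lemma Qth_0 B a : Qth B 0 a = Mh a 0.
Proof.
rewrite /Qth (big_pred1 [tuple]); last by move=> t; apply/esym/eqP; exact: tuple0.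
by rewrite big_nat1.
Qed.

Lemma V00 : V 0 0 = 1.
Proof.
rewrite /V /= qfactS qfact0 mul1r qint1 expr0 (_ : 'C(1, 2) = 0%N) //.
by rewrite expr0 !mulr1 invr1 mulr1.
Qed.

Lemma Qth_V B m a : (m < B)%N -> Qth B m a = V m.+1 a.
Proof.
elim: m a => [|m IH] a Hm.
  rewrite Qth_0 -(step a Hm).
  case: B Hm => [//|B] _.
  rewrite big_ord_recl /= V00 mulr1 big1 ?addr0 // => c _.
  by rewrite V_gt ?mulr0.
rewrite Qth_S.
under eq_bigr => c _ do rewrite (IH c (ltnW Hm)).
exact: step.
Qed.

Lemma fseq_nth n s k : size s = n.-1 -> (k <= n)%N -> fseq n s k = nth 0%N (0%N :: s) k.
Proof.
move=> Hs Hk; rewrite /fseq; case: k Hk => [|k] Hk /=; first by [].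
case: ifP => // H; rewrite nth_default // Hs.
case: n Hs Hk H => [//|n] Hs Hk H /=.
move: H; rewrite /=. lia.
Qed.

Theorem main_gen n :
  q ^+ ((n * (n - 1)) %/ 2) * h_at q^-1 n = (HZg n).[1] / (1 + q) ^+ n.
Proof.
case: n => [|m].
  rewrite /h_at mul0n div0n expr0 mul1r (big_pred1 [tuple]); last by move=> t; apply/esym/eqP; exact: tuple0.
  rewrite !big_geq // expr0z mul1r expr0 divr1.
  by rewrite hornerE.
have -> : ((m.+1 * (m.+1 - 1)) %/ 2)%N = 'C(m.+1, 2) by rewrite bin2 subn1 divn2.
rewrite /h_at mulr_sumr.
transitivity (Qth m.+1 m 0).
  apply: eq_bigr => f _.
  rewrite conv; last first.
  - by rewrite /fseq ltnn andbF.
  - by [].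
  apply: eq_big_nat => k Hk.
  rewrite !fseq_nth // ?size_map ?size_tuple //; lia.
rewrite Qth_V // HZ1 /V /= qfactS qfact0 mul1r qint1 (_ : 'C(1, 2) = 0%N) //.
by rewrite expr0 !mulr1 mul1r.
Qed.

End Gen.

Lemma q_neq0 : qK != 0.
Proof. rewrite /qK tofrac_eq0. apply: negbT. exact: (@polyX_eq0 rat). Qed.

Lemma qi_neq0 k : (0 < k)%N -> qint qK k != 0.
Proof.
case: k => // k _.
have -> : qint qK k.+1 = tofrac (\sum_(j < k.+1) 'X^j : {poly rat}).
  by rewrite rmorph_sum /qint; apply: eq_bigr => j _; rewrite rmorphXn.
rewrite tofrac_eq0; apply/eqP => H.
have := congr1 (fun p => p.[0]) H; rewrite horner_sum hornerC big_ord_recl /=.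
rewrite hornerXn expr0 big1 ?addr0; first by move/eqP; rewrite oner_eq0.
by move=> i _; rewrite hornerXn expr0n.
Qed.

Lemma HZ_eq n : HZ n = HZg qK n.
Proof.
elim: n => [|n IH]; first reflexivity.
change (HZ n.+1) with (aK * ((aK * (HZ n \Po aK) - 'X * HZ n) %/ (aK - 'X))).
rewrite IH; reflexivity.
Qed.

Theorem corollary3p5 (n : nat) : htilde n = cbar n.+1.
Proof.
change (qK ^+ ((n * (n - 1)) %/ 2) * h_at qK^-1 n = (HZ n).[1] / (1 + qK) ^+ n).
rewrite HZ_eq.
exact: (main_gen q_neq0 qi_neq0 n).
Qed.
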